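(* Let $\mathcal{F}\subseteq\mathcal{O}$ be a normal family of objects and let $(M_p)_{p\in\mathcal{F}}$ be the Voronoi partition of $V(G)$ with respect to $\mathcal{F}$. Then for every $p\in\mathcal{F}$ we have $\mathrm{loc}(p)\subseteq M_p$.
   Context: $G$ is a connected graph with positive edge weights; $\mathrm{dist}(X,Y)$ denotes the minimum weight of a path between a vertex of $X$ and a vertex of $Y$. Each object $p\in\mathcal{O}$ has a location $\mathrm{loc}(p)$, a nonempty vertex set inducing a connected subgraph, and a radius $\mathrm{rad}(p)\ge 0$. A family $\mathcal{F}$ is normal if locations of its members are pairwise disjoint and $\mathrm{dist}(\mathrm{loc}(p_1),\mathrm{loc}(p_2))>\mathrm{rad}(p_1)-\mathrm{rad}(p_2)$ for all ordered pairs of distinct $p_1,p_2\in\mathcal{F}$. Standing assumption: all values $\mathrm{dist}(u,v)$ and $\mathrm{dist}(u,v)-\mathrm{rad}(p)$ ($u,v\in V(G)$, $p\in\mathcal{O}$) are pairwise different and shortest paths are unique, so there are no ties. The Voronoi partition assigns $v\in V(G)$ to $M_{p_0}$ iff $\mathrm{dist}(v,\mathrm{loc}(p_0))-\mathrm{rad}(p_0)$ is the smallest among the values $\mathrm{dist}(v,\mathrm{loc}(p))-\mathrm{rad}(p)$, $p\in\mathcal{F}$. *)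

(* Defs.v *)
From mathcomp Require Import all_boot all_order all_algebra.
Set Implicit Arguments. Unset Strict Implicit. Unset Printing Implicit Defensive.
Import Order.TTheory GRing.Theory Num.Theory.
Local Open Scope ring_scope.

Section Defs.
Variables (R : realFieldType) (V : finType).

Definition weighted_graph (e : rel V) (w : V -> V -> R) : Prop :=
  [/\ forall x y, e x y = e y x, forall x, ~~ e x x,
      forall x y, w x y = w y x & forall x y, e x y -> 0 < w x y].

Definition graph_connected (e : rel V) : Prop := forall x y : V, connect e x y.

Definition walk_weight (w : V -> V -> R) (x : V) (p : seq V) : R :=
  \sum_(i <- zip (x :: p) p) w i.1 i.2.

Definition is_setdist (e : rel V) (w : V -> V -> R) (X Y : {set V}) (d : R) : Prop :=
  (exists x p, [/\ x \in X, path e x p, last x p \in Y & walk_weight w x p = d]) /\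
  (forall x p, x \in X -> path e x p -> last x p \in Y -> d <= walk_weight w x p).

Definition induces_connected (e : rel V) (S : {set V}) : Prop :=
  {in S &, forall x y, connect [rel a b | [&& e a b, a \in S & b \in S]] x y}.

Variable O : finType.

Definition objects_ok (e : rel V) (loc : O -> {set V}) (rad : O -> R) : Prop :=
  forall p, [/\ loc p != set0, induces_connected e (loc p) & 0 <= rad p].

(* Normal family, with [D X Y] the set distance dist(X,Y). *)
Definition normal_family (D : {set V} -> {set V} -> R) (loc : O -> {set V})
    (rad : O -> R) (F : {set O}) : Prop :=
  {in F &, forall p1 p2, p1 != p2 ->
     [disjoint loc p1 & loc p2] /\ rad p1 - rad p2 < D (loc p1) (loc p2)}.

Definition voronoi_cell (D : {set V} -> {set V} -> R) (loc : O -> {set V})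
    (rad : O -> R) (F : {set O}) (p0 : O) : {set V} :=
  [set v | [forall p in F, (p != p0) ==>
     (D [set v] (loc p0) - rad p0 < D [set v] (loc p) - rad p)]].
End Defs.

(* Main.v *)
Require Import Defs.
From mathcomp Require Import all_boot all_order all_algebra.
From mathcomp Require Import lra.
Import Order.TTheory GRing.Theory Num.Theory.
Local Open Scope ring_scope.

Section H.
Variables (R : realFieldType) (V : finType) (w : V -> V -> R).

Lemma ww_nil x : walk_weight w x [::] = 0.
Proof. by rewrite /walk_weight big_nil. Qed.

Lemma ww_cons x y p : walk_weight w x (y :: p) = w x y + walk_weight w y p.
Proof. by rewrite /walk_weight /= big_cons. Qed.

Lemma ww_rcons z s t : walk_weight w z (rcons s t) = walk_weight w z s + w (last z s) t.
Proof.
elim: s z => [|a s IH] z /=; first by rewrite ww_cons !ww_nil add0r addr0.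
by rewrite !ww_cons IH addrA.
Qed.

Lemma last_rev_belast (y : V) p : last (last y p) (rev (belast y p)) = y.
Proof.
have H : last y p :: rev (belast y p) = rev (y :: p) by rewrite [y :: p]lastI rev_rcons.
have -> : last (last y p) (rev (belast y p)) = last y (last y p :: rev (belast y p)) by [].
by rewrite H rev_cons last_rcons.
Qed.

Lemma ww_rev (hs : forall x y, w x y = w y x) x p :
  walk_weight w (last x p) (rev (belast x p)) = walk_weight w x p.
Proof.
elim: p x => [|y p IH] x /=; first by [].
by rewrite rev_cons ww_rcons IH last_rev_belast ww_cons addrC hs.
Qed.

Lemma ww_ge0 (e : rel V) (hp : forall x y, e x y -> 0 < w x y) x p :
  path e x p -> 0 <= walk_weight w x p.
Proof.
elim: p x => [|y p IH] x /=; first by rewrite ww_nil.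
move=> /andP[exy pp]; rewrite ww_cons addr_ge0 //; first exact: ltW (hp _ _ exy).
exact: IH.
Qed.
End H.

Theorem lemma4p1 (R : realFieldType) (V : finType) (e : rel V) (w : V -> V -> R)
    (D : {set V} -> {set V} -> R) (O : finType) (loc : O -> {set V}) (rad : O -> R)
    (F : {set O}) :
  weighted_graph e w -> graph_connected e ->
  (forall X Y : {set V}, X != set0 -> Y != set0 -> is_setdist e w X Y (D X Y)) ->
  objects_ok e loc rad ->
  normal_family D loc rad F ->
  forall p, p \in F -> loc p \subset voronoi_cell D loc rad F p.
Proof.
move=> [esym _ wsym wpos] _ hD hok hnorm p pF.
apply/subsetP => v vp; rewrite inE; apply/forall_inP => q qF; apply/implyP => qp.
have v0 : [set v] != set0 by apply/set0Pn; exists v; rewrite inE.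
have [lp0 _ _] := hok p; have [lq0 _ _] := hok q.
have Dp : D [set v] (loc p) = 0.
  have [[x [s [xin ps _ <-]]] hle] := hD _ _ v0 lp0.
  apply/eqP; rewrite eq_le; apply/andP; split.
    by have := hle v [::]; rewrite ww_nil inE eqxx /=; apply.
  exact: ww_ge0 wpos x s ps.
have [_ hlt] := hnorm q p qF pF qp.
have [[x [s [xin ps ls <-]]] _] := hD _ _ v0 lq0.
move: xin; rewrite inE => /eqP ?; subst x.
have [_ hle] := hD _ _ lq0 lp0.
have := hle (last v s) (rev (belast v s)) ls.
rewrite rev_path ww_rev // (last_rev_belast) .
have -> : path (fun z : V => e^~ z) v s = path e v s.
  by apply: eq_path => a b; rewrite esym.
move=> /(_ _ vp) H.
rewrite Dp; move: (lt_le_trans hlt (H ps)); rewrite sub0r.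
move=> h.
lra.
Qed.
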